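(* Let $\Gamma$ be a finitely generated linear group whose centre is trivial. Then $\Gamma$ is uniquely directly decomposable.
   Context: A group is linear if it is a subgroup of $\mathrm{GL}_d(K)$ for some integer $d$ and field $K$. A group is indecomposable if it is nontrivial and, for every isomorphism with a direct product $\Gamma_1\times\Gamma_2$, one factor is trivial. A group is uniquely directly decomposable if it is isomorphic to a restricted direct sum of indecomposable groups, and this in a unique way up to isomorphism of the factors (i.e. any two such decompositions have factors that can be matched bijectively with isomorphic matched factors). The trivial group counts as uniquely directly decomposable (empty sum). *)

(* Defs.v *)
(* abstract groups
   are given by an explicit record since MathComp has no infinite groups. *)
From Stdlib Require Lists.List.
From mathcomp Require Import all_boot all_algebra.
Set Implicit Arguments. Unset Strict Implicit. Unset Printing Implicit Defensive.
Import GRing.Theory.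

Record group := Group {
  carrier :> Type;
  gmul : carrier -> carrier -> carrier;
  gone : carrier;
  ginv : carrier -> carrier;
  gmulA : forall x y z, gmul x (gmul y z) = gmul (gmul x y) z;
  gmul1l : forall x, gmul gone x = x;
  gmul1r : forall x, gmul x gone = x;
  gmulVl : forall x, gmul (ginv x) x = gone;
  gmulVr : forall x, gmul x (ginv x) = gone
}.

Definition is_hom (G H : group) (f : G -> H) : Prop :=
  forall x y, f (gmul x y) = gmul (f x) (f y).

Definition bijective_map (A B : Type) (f : A -> B) : Prop :=
  (forall x y, f x = f y -> x = y) /\ (forall b, exists a, f a = b).

Definition group_iso (G H : group) : Prop :=
  exists f : G -> H, is_hom f /\ bijective_map f.

Definition trivial_group (G : group) : Prop := forall x : G, x = gone G.

Definition linear_group (G : group) : Prop :=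
  exists (K : fieldType) (d : nat) (rho : G -> 'M[K]_d),
    (forall x y, rho x = rho y -> x = y) /\
    (forall x, rho x \in unitmx) /\
    (forall x y, rho (gmul x y) = (rho x *m rho y)%R).

Inductive generated (G : group) (S : G -> Prop) : G -> Prop :=
  | gen_base x : S x -> generated S x
  | gen_one : generated S (gone G)
  | gen_mul x y : generated S x -> generated S y -> generated S (gmul x y)
  | gen_inv x : generated S x -> generated S (ginv x).

Definition finitely_generated (G : group) : Prop :=
  exists s : list G, forall x, generated (fun y => Stdlib.Lists.List.In y s) x.

Definition trivial_centre (G : group) : Prop :=
  forall z : G, (forall x, gmul z x = gmul x z) -> z = gone G.

Definition iso_direct_product (G G1 G2 : group) : Prop :=
  exists f : G -> (G1 * G2)%type,
    (forall x y, f (gmul x y) = (gmul (f x).1 (f y).1, gmul (f x).2 (f y).2)) /\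
    bijective_map f.

Definition indecomposable (G : group) : Prop :=
  ~ trivial_group G /\
  forall G1 G2 : group, iso_direct_product G G1 G2 ->
    trivial_group G1 \/ trivial_group G2.

Definition fin_support (I : Type) (H : I -> group) (f : forall i, H i) : Prop :=
  exists s : list I, forall i, ~ Stdlib.Lists.List.In i s -> f i = gone (H i).

(* G is isomorphic to the restricted direct sum of the family H: a
   homomorphism into the full product (pointwise operations), injective,
   with image exactly the finitely supported elements. *)
Definition iso_restricted_sum (G : group) (I : Type) (H : I -> group) : Prop :=
  exists phi : G -> forall i, H i,
    (forall x y, phi (gmul x y) = (fun i => gmul (phi x i) (phi y i))) /\
    (forall x y, phi x = phi y -> x = y) /\
    (forall f, fin_support f <-> exists x, phi x = f).

Definition direct_decomposition (G : group) (I : Type) (H : I -> group) : Prop :=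
  (forall i, indecomposable (H i)) /\ iso_restricted_sum G H.

Definition uniquely_directly_decomposable (G : group) : Prop :=
  (exists (I : Type) (H : I -> group), direct_decomposition G H) /\
  forall (I : Type) (H : I -> group) (J : Type) (K : J -> group),
    direct_decomposition G H -> direct_decomposition G K ->
    exists sigma : I -> J, bijective_map sigma /\
      forall i, group_iso (H i) (K (sigma i)).

(* Main.v *)
Require Import Defs.
From mathcomp Require Import all_boot all_algebra.
From Stdlib Require Import Classical ClassicalDescription ProofIrrelevance FunctionalExtensionality ClassicalEpsilon.
Set Implicit Arguments. Unset Strict Implicit.

Section LinAlg.
Import GRing.Theory.
Local Open Scope ring_scope.

Lemma lin_indep_bound (K : fieldType) (d n : nat) (S T : nat -> 'M[K]_d) :
  (forall l m, (l < n)%N -> (m < n)%N -> l <> m -> S m *m T l = T l *m S m) ->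
  (forall l, (l < n)%N -> S l *m T l <> T l *m S l) -> (n <= d * d)%N.
Proof.
move=> hc hn.
pose X : n.-tuple 'M[K]_d := [tuple S i | i < n].
have fX : free X.
  apply/freeP => k hk i.
  have := congr1 (fun M => M *m T i - T i *m M) hk.
  rewrite mul0mx mulmx0 subrr mulmx_suml mulmx_sumr -sumrB.
  rewrite (bigD1 i) //= big1 ?addr0.
    rewrite !nth_mktuple -scalemxAl -scalemxAr -scalerBr => /eqP.
    rewrite scaler_eq0 subr_eq0 => /orP [/eqP // | /eqP e].
    by exfalso; apply: (hn i (ltn_ord i)).
  move=> j nji; rewrite !nth_mktuple -scalemxAl -scalemxAr.
  rewrite hc ?ltn_ord // ?subrr ?scaler0 //.
  by move=> e; apply: (negP nji); apply/eqP/val_inj.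
move: fX; rewrite /free size_tuple => /eqP <-.
apply: leq_trans (dimvS (subvf _)) _; rewrite dimvf dim_matrix; exact: leqnn.
Qed.

End LinAlg.

Local Notation "x ** y" := (gmul x y) (at level 40, left associativity).
Local Notation "1" := (gone _).


Section GroupBasics.
Variable G : group.
Implicit Types x y z : G.

Lemma mulKg x y : ginv x ** (x ** y) = y.
Proof. by rewrite gmulA gmulVl gmul1l. Qed.
Lemma mulVKg x y : x ** (ginv x ** y) = y.
Proof. by rewrite gmulA gmulVr gmul1l. Qed.
Lemma mulgK x y : (y ** x) ** ginv x = y.
Proof. by rewrite -gmulA gmulVr gmul1r. Qed.
Lemma mulgVK x y : (y ** ginv x) ** x = y.
Proof. by rewrite -gmulA gmulVl gmul1r. Qed.
Lemma mulg_cancl x y z : x ** y = x ** z -> y = z.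
Proof. by move=> e; rewrite -(mulKg x y) e mulKg. Qed.
Lemma mulg_cancr x y z : y ** x = z ** x -> y = z.
Proof. by move=> e; rewrite -(mulgK x y) e mulgK. Qed.
Lemma inv_uniq x y : x ** y = 1 -> y = ginv x.
Proof. by move=> e; apply: (@mulg_cancl x); rewrite e gmulVr. Qed.
Lemma ginvK x : ginv (ginv x) = x.
Proof. by symmetry; apply: inv_uniq; rewrite gmulVl. Qed.
Lemma ginv1 : ginv (gone G) = 1.
Proof. by symmetry; apply: inv_uniq; rewrite gmul1l. Qed.
Lemma ginvM x y : ginv (x ** y) = ginv y ** ginv x.
Proof. by symmetry; apply: inv_uniq; rewrite -gmulA (gmulA y) gmulVr gmul1l gmulVr. Qed.
Lemma mul_eq1 x y : x ** y = 1 -> x = ginv y.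
Proof. by move=> e; apply: (@mulg_cancr y); rewrite e gmulVl. Qed.
Lemma div_eq1 x y : ginv x ** y = 1 -> x = y.
Proof. by move=> /inv_uniq ->; rewrite ginvK. Qed.

Definition gcomm x y := x ** y = y ** x.
Lemma gcommM x y z : gcomm x z -> gcomm y z -> gcomm (x ** y) z.
Proof. by rewrite /gcomm => a b; rewrite -gmulA b gmulA a gmulA. Qed.
Lemma gcommV x z : gcomm x z -> gcomm (ginv x) z.
Proof.
rewrite /gcomm => a; apply: (@mulg_cancl x); rewrite mulVKg gmulA a -gmulA.
by rewrite gmulVr gmul1r.
Qed.
Lemma gcommC x y : gcomm x y -> gcomm y x.
Proof. by []. Qed.
Lemma gcomm1 x : gcomm x 1.
Proof. by rewrite /gcomm gmul1l gmul1r. Qed.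
End GroupBasics.

Lemma hom1 (G H : group) (f : G -> H) : (forall x y, f (x ** y) = f x ** f y) -> f 1 = 1.
Proof.
move=> hf; apply: (@mulg_cancl _ (f 1)); by rewrite -hf !gmul1r.
Qed.
Lemma homV (G H : group) (f : G -> H) : (forall x y, f (x ** y) = f x ** f y) ->
  forall x, f (ginv x) = ginv (f x).
Proof. by move=> hf x; apply: inv_uniq; rewrite -hf gmulVr (hom1 hf). Qed.

Lemma sig_inj (A : Type) (P : A -> Prop) (a b : {x | P x}) :
  proj1_sig a = proj1_sig b -> a = b.
Proof. by case: a b => [a pa] [b pb] /= e; subst b; rewrite (proof_irrelevance _ pa pb). Qed.

Section Subgroup.
Variables (G : group) (S : G -> Prop) (S1 : S 1)
  (SM : forall x y, S x -> S y -> S (x ** y)) (SV : forall x, S x -> S (ginv x)).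
Definition sg_mul (a b : {x | S x}) : {x | S x} :=
  exist S (proj1_sig a ** proj1_sig b) (SM (proj2_sig a) (proj2_sig b)).
Definition sg_one : {x | S x} := exist S 1 S1.
Definition sg_inv (a : {x | S x}) : {x | S x} := exist S (ginv (proj1_sig a)) (SV (proj2_sig a)).
Definition subgrp : group.
refine (@Defs.Group {x | S x} sg_mul sg_one sg_inv _ _ _ _ _);
  move=> *; apply: sig_inj => /=.
- exact: gmulA.
- exact: gmul1l.
- exact: gmul1r.
- exact: gmulVl.
- exact: gmulVr.
Defined.
End Subgroup.


Section Psys.
Variables (G : group) (I : Type) (P : I -> G -> G).
Hypotheses (Phom : forall i x y, P i (x ** y) = P i x ** P i y)
  (Pidem : forall i x, P i (P i x) = P i x)
  (Porth : forall i j x, i <> j -> P i (P j x) = 1)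
  (Pext : forall x y, (forall i, P i x = P i y) -> x = y).

Lemma P1 i : P i 1 = 1. Proof. exact: hom1 (Phom i). Qed.
Lemma PV i x : P i (ginv x) = ginv (P i x). Proof. by have := homV (Phom i) x. Qed.

Lemma comm_img_ker i z y : P i z = z -> P i y = 1 -> gcomm z y.
Proof.
move=> hz hy; apply: Pext => j; rewrite !Phom.
case: (classic (j = i)) => [->|ne].
  by rewrite hz hy gmul1l gmul1r.
by rewrite -hz Porth // gmul1l gmul1r.
Qed.

Lemma comm_img_img i j x y : i <> j -> gcomm (P i x) (P j y).
Proof.
move=> ne; apply: gcommC; apply: (@comm_img_ker j); first exact: Pidem.
by apply: Porth => e; apply: ne.
Qed.

Lemma centerless_fix i z : trivial_centre G ->
  (forall y, P i y = 1 -> gcomm z y) -> P i z = z.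
Proof.
move=> tc hz.
pose w := ginv (P i z) ** z.
have Pw : P i w = 1 by rewrite /w Phom PV Pidem gmulVl.
have cw : forall g, gcomm w g.
  move=> g.
  have -> : g = P i g ** (ginv (P i g) ** g) by rewrite mulVKg.
  have Pk : P i (ginv (P i g) ** g) = 1 by rewrite Phom PV Pidem gmulVl.
  apply: gcommC; apply: gcommM.
    apply: (@comm_img_ker i); [exact: Pidem | exact: Pw].
  apply: gcommC; apply: gcommM.
    apply: gcommV; apply: (@comm_img_ker i); [exact: Pidem | exact: Pk].
  exact: hz.
have w1 : w = 1 by apply: tc.
by apply: div_eq1.
Qed.
End Psys.

Section TwoPsys.
Variables (G : group) (I J : Type) (P : I -> G -> G) (Q : J -> G -> G).
Hypotheses (Phom : forall i x y, P i (x ** y) = P i x ** P i y)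
  (Pidem : forall i x, P i (P i x) = P i x)
  (Porth : forall i j x, i <> j -> P i (P j x) = 1)
  (Pext : forall x y, (forall i, P i x = P i y) -> x = y).
Hypotheses (Qhom : forall i x y, Q i (x ** y) = Q i x ** Q i y)
  (Qidem : forall i x, Q i (Q i x) = Q i x)
  (Qorth : forall i j x, i <> j -> Q i (Q j x) = 1)
  (Qext : forall x y, (forall i, Q i x = Q i y) -> x = y).
Hypothesis tc : trivial_centre G.

Lemma QP_fix i j x : P i (Q j (P i x)) = Q j (P i x).
Proof.
apply: (centerless_fix Phom Pidem Porth Pext) => // y Py.
have -> : y = Q j y ** (ginv (Q j y) ** y) by rewrite mulVKg.
apply: gcommC; apply: gcommM; apply: gcommC.
  have c : gcomm (P i x) y by apply: (comm_img_ker Phom Porth Pext); [exact: Pidem | exact: Py].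
  by rewrite /gcomm -!Qhom c.
apply: (comm_img_ker Qhom Qorth Qext (i:=j)); first exact: Qidem.
by rewrite Qhom (PV Qhom) Qidem gmulVl.
Qed.

Lemma match_bij :
  (forall i, exists x, P i x <> 1) -> (forall j, exists y, Q j y <> 1) ->
  (forall i, exists j, forall x, Q j (P i x) = P i x) ->
  (forall j, exists i, forall y, P i (Q j y) = Q j y) ->
  exists sigma : I -> J, bijective_map sigma /\
    forall i, (forall x, Q (sigma i) (P i x) = P i x) /\
              (forall y, P i (Q (sigma i) y) = Q (sigma i) y).
Proof.
move=> ntP ntQ hPQ hQP.
have [sigma hs] : exists sigma : I -> J, forall i x, Q (sigma i) (P i x) = P i x.
  exists (fun i => proj1_sig (constructive_indefinite_description _ (hPQ i))).
  move=> i; exact: (proj2_sig (constructive_indefinite_description _ (hPQ i))).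
have [tau ht] : exists tau : J -> I, forall j y, P (tau j) (Q j y) = Q j y.
  exists (fun j => proj1_sig (constructive_indefinite_description _ (hQP j))).
  move=> j; exact: (proj2_sig (constructive_indefinite_description _ (hQP j))).
have ts : forall i, tau (sigma i) = i.
  move=> i; apply: NNPP => ne; case: (ntP i) => x0 hx0; apply: hx0.
  by rewrite -hs -(ht (sigma i)) hs Porth.
have st : forall j, sigma (tau j) = j.
  move=> j; apply: NNPP => ne; case: (ntQ j) => y0 hy0; apply: hy0.
  by rewrite -ht -(hs (tau j)) ht Qorth.
exists sigma; split.
  split; first by move=> a b e; rewrite -(ts a) -(ts b) e.
  by move=> b; exists (tau b); rewrite st.
move=> i; split; first exact: hs.
by move=> y; rewrite -{1}(ts i); apply: ht.
Qed.
End TwoPsys.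


Section Dec.
Variables (G : group) (I : Type) (H : I -> group) (phi : G -> forall i, H i).
Hypotheses (phom : forall x y, phi (x ** y) = (fun i => phi x i ** phi y i))
  (pinj : forall x y, phi x = phi y -> x = y)
  (psurj : forall f, fin_support f -> exists x, phi x = f).

Lemma phiM x y i : phi (x ** y) i = phi x i ** phi y i.
Proof. by rewrite phom. Qed.
Lemma phi1 i : phi 1 i = 1.
Proof. exact: (@hom1 G (H i) (fun x => phi x i) (fun x y => phiM x y i)). Qed.
Lemma phi_ext x y : (forall i, phi x i = phi y i) -> x = y.
Proof. by move=> h; apply: pinj; apply: functional_extensionality_dep. Qed.

Definition delta i (h : H i) : forall k, H k := fun k =>
  match excluded_middle_informative (i = k) with
  | left e => eq_rect i H h k e
  | right _ => gone (H k) end.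
Lemma delta_at i h : @delta i h i = h.
Proof.
rewrite /delta; case: excluded_middle_informative => [e|n]; last by case: n.
by rewrite (proof_irrelevance _ e erefl).
Qed.
Lemma delta_off i h k : i <> k -> @delta i h k = 1.
Proof. by rewrite /delta; case: excluded_middle_informative. Qed.
Lemma delta_fs i h : fin_support (@delta i h).
Proof.
exists (i :: nil) => k nk; apply: delta_off => e; apply: nk; by left.
Qed.
Definition emb i (h : H i) : G :=
  proj1_sig (constructive_indefinite_description _ (psurj (delta_fs h))).
Lemma phi_emb i h : phi (@emb i h) = delta h.
Proof. exact: (proj2_sig (constructive_indefinite_description _ (psurj (delta_fs h)))). Qed.
Lemma emb_at i h : phi (@emb i h) i = h.
Proof. by rewrite phi_emb delta_at. Qed.
Lemma emb_off i h k : i <> k -> phi (@emb i h) k = 1.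
Proof. by move=> ne; rewrite phi_emb delta_off. Qed.
Lemma embM i a b : @emb i (a ** b) = emb a ** emb b.
Proof.
apply: phi_ext => k; rewrite phiM.
case: (classic (i = k)) => [<-|ne]; first by rewrite !emb_at.
by rewrite !emb_off // gmul1l.
Qed.
Lemma emb1 i : @emb i 1 = 1.
Proof. exact: hom1 (@embM i). Qed.
Lemma emb_inj i a b : @emb i a = emb b -> a = b.
Proof. by move=> e; rewrite -(emb_at a) e emb_at. Qed.

Definition Pd i x := @emb i (phi x i).
Lemma PdM i x y : Pd i (x ** y) = Pd i x ** Pd i y.
Proof. by rewrite /Pd phiM embM. Qed.
Lemma Pd_idem i x : Pd i (Pd i x) = Pd i x.
Proof. by rewrite /Pd emb_at. Qed.
Lemma Pd_orth i j x : i <> j -> Pd i (Pd j x) = 1.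
Proof. by move=> ne; rewrite /Pd emb_off ?emb1 // => e; apply: ne. Qed.
Lemma Pd_ext x y : (forall i, Pd i x = Pd i y) -> x = y.
Proof. by move=> h; apply: phi_ext => i; apply: (@emb_inj i); apply: h. Qed.
Lemma emb_fix i h : Pd i (@emb i h) = emb h.
Proof. by rewrite /Pd emb_at. Qed.

Lemma dec_nontriv i : ~ trivial_group (H i) -> exists x, Pd i x <> 1.
Proof.
move=> nt; have [h hh] := not_all_ex_not _ _ nt.
exists (emb h); rewrite emb_fix => e; apply: hh.
by rewrite -(emb_at h) e phi1.
Qed.

Lemma U3 (J : Type) (Q : J -> G -> G)
  (Qhom : forall i x y, Q i (x ** y) = Q i x ** Q i y)
  (Qidem : forall i x, Q i (Q i x) = Q i x)
  (Qorth : forall i j x, i <> j -> Q i (Q j x) = 1)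
  (Qext : forall x y, (forall i, Q i x = Q i y) -> x = y)
  (tc : trivial_centre G) i :
  indecomposable (H i) -> exists j, forall x, Q j (Pd i x) = Pd i x.
Proof.
case=> ntH ind.
have [x0 hx0] := dec_nontriv ntH.
have [j hj] : exists j, Q j (Pd i x0) <> 1.
  apply: NNPP => nj; apply: hx0; apply: Qext => j.
  rewrite (P1 Qhom); apply: NNPP => ne; apply: nj; by exists j.
exists j.
have QPf := QP_fix PdM Pd_idem Pd_orth Pd_ext Qhom Qidem Qorth Qext tc.
pose S1 x := Pd i x = x /\ Q j x = x.
pose S2 x := Pd i x = x /\ Q j x = 1.
have S11 : S1 1 by split; [exact: (P1 PdM i) | exact: (P1 Qhom j)].
have S1M : forall x y, S1 x -> S1 y -> S1 (x ** y).
  by move=> x y [a b] [c d]; split; rewrite ?PdM ?Qhom ?a ?b ?c ?d.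
have S1V : forall x, S1 x -> S1 (ginv x).
  by move=> x [a b]; split; rewrite ?(PV PdM) ?(PV Qhom) ?a ?b.
have S21 : S2 1 by split; [exact: (P1 PdM i) | exact: (P1 Qhom j)].
have S2M : forall x y, S2 x -> S2 y -> S2 (x ** y).
  by move=> x y [a b] [c d]; split; rewrite ?PdM ?Qhom ?a ?b ?c ?d ?gmul1l.
have S2V : forall x, S2 x -> S2 (ginv x).
  by move=> x [a b]; split; rewrite ?(PV PdM) ?(PV Qhom) ?a ?b ?ginv1.
pose G1 := subgrp S11 S1M S1V.
pose G2 := subgrp S21 S2M S2V.
pose a (h : H i) := Q j (emb h).
pose b (h : H i) := ginv (a h) ** emb h.
have Pa : forall h, Pd i (a h) = a h.
  by move=> h; rewrite /a -{1 2}(emb_fix h) QPf.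
have Sa : forall h, S1 (a h) by move=> h; split; [exact: Pa | exact: Qidem].
have Sb : forall h, S2 (b h).
  move=> h; split; rewrite /b.
    by rewrite PdM (PV PdM) Pa emb_fix.
  by rewrite Qhom (PV Qhom) Qidem gmulVl.
pose f (h : H i) : (G1 * G2)%type := (exist S1 (a h) (Sa h), exist S2 (b h) (Sb h)).
have Hf : iso_direct_product (H i) G1 G2.
  exists f; split.
    move=> x y; rewrite /f; congr pair; apply: sig_inj => /=.
      by rewrite /a embM Qhom.
    rewrite /b /a embM Qhom ginvM.
    have c : gcomm (Q j (emb y)) (ginv (Q j (emb x)) ** emb x).
      apply: (comm_img_ker Qhom Qorth Qext (i:=j)); first exact: Qidem.
      by rewrite Qhom (PV Qhom) Qidem gmulVl.
    have c' := gcommV c.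
    rewrite /gcomm in c'.
    by rewrite !gmulA -c' !gmulA.
  split.
    move=> x y e.
    have e1 : a x = a y by have := f_equal (fun p => proj1_sig p.1) e.
    have e2 : b x = b y by have := f_equal (fun p => proj1_sig p.2) e.
    apply: (@emb_inj i).
    by rewrite -(mulVKg (a x) (emb x)) -/(b x) e1 e2 /b mulVKg.
  case=> [[u [Pu Qu]] [v [Pv Qv]]].
  pose x := u ** v.
  have ex : emb (phi x i) = x by rewrite -/(Pd i x) PdM Pu Pv.
  exists (phi x i); rewrite /f; congr pair; apply: sig_inj => /=.
    by rewrite /a ex Qhom Qu Qv gmul1r.
  by rewrite /b /a ex Qhom Qu Qv gmul1r mulKg.
case: (ind G1 G2 Hf) => triv.
  exfalso; apply: hj.
  have S1z : S1 (Q j (Pd i x0)) by split; [exact: QPf | exact: Qidem].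
  have := triv (exist S1 _ S1z).
  by move=> /(f_equal (@proj1_sig _ _)).
move=> x.
have := triv (f (phi x i)).2.
move=> /(f_equal (@proj1_sig _ _)) /= /div_eq1.
by rewrite /a.
Qed.
End Dec.


Lemma U5 (G : group) (I : Type) (H : I -> group) (phi : G -> forall i, H i)
  (phom : forall x y, phi (x ** y) = (fun i => phi x i ** phi y i))
  (pinj : forall x y, phi x = phi y -> x = y)
  (psurj : forall f, fin_support f -> exists x, phi x = f)
  (J : Type) (K : J -> group) (psi : G -> forall j, K j)
  (qhom : forall x y, psi (x ** y) = (fun j => psi x j ** psi y j))
  (qinj : forall x y, psi x = psi y -> x = y)
  (qsurj : forall f, fin_support f -> exists x, psi x = f) i j :
  (forall x, Pd qsurj j (Pd psurj i x) = Pd psurj i x) ->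
  (forall y, Pd psurj i (Pd qsurj j y) = Pd qsurj j y) ->
  group_iso (H i) (K j).
Proof.
move=> h1 h2.
exists (fun h => psi (emb psurj h) j); split.
  by move=> x y; rewrite (embM phom pinj) (phiM qhom).
split.
  move=> x y e.
  apply: (@emb_inj _ _ _ _ psurj i); rewrite -(emb_fix psurj x) -(emb_fix psurj y) -h1 -(h1 (emb psurj y)).
  by rewrite !(emb_fix psurj) /Pd e.
move=> k.
pose y := emb qsurj (i:=j) k.
have Py : Pd psurj i y = y by rewrite /y -(emb_fix qsurj k) h2.
exists (phi y i).
by rewrite -/(Pd psurj i y) Py emb_at.
Qed.

Lemma uniqueness (G : group) (tc : trivial_centre G) (I : Type) (H : I -> group)
  (J : Type) (K : J -> group) :
  direct_decomposition G H -> direct_decomposition G K ->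
  exists sigma : I -> J, bijective_map sigma /\
      forall i, group_iso (H i) (K (sigma i)).
Proof.
move=> [indH [phi [phom [pinj psurjE]]]] [indK [psi [qhom [qinj qsurjE]]]].
have psurj : forall f, fin_support f -> exists x, phi x = f by move=> f /psurjE.
have qsurj : forall f, fin_support f -> exists x, psi x = f by move=> f /qsurjE.
have [sigma [bij hs]] := match_bij (Pd_orth phom pinj psurj) (Pd_orth qhom qinj qsurj)
  (fun i => dec_nontriv phom psurj (proj1 (indH i)))
  (fun j => dec_nontriv qhom qsurj (proj1 (indK j)))
  (fun i => U3 phom pinj psurj (PdM qhom qinj qsurj) (Pd_idem qsurj)
       (Pd_orth qhom qinj qsurj) (@Pd_ext _ _ _ _ qinj qsurj) tc (indH i))
  (fun j => U3 qhom qinj qsurj (PdM phom pinj psurj) (Pd_idem psurj)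
       (Pd_orth phom pinj psurj) (@Pd_ext _ _ _ _ pinj psurj) tc (indK j)).
exists sigma; split => // i.
have [a b] := hs i.
move: a b; exact: U5.
Qed.


Record idec (G : group) (n : nat) (e : nat -> G -> G) : Prop := {
  ehom : forall l x y, e l (x ** y) = e l x ** e l y;
  eidem : forall l x, e l (e l x) = e l x;
  eorth : forall l m x, l <> m -> e l (e m x) = 1;
  etriv : forall l x, n <= l -> e l x = 1;
  eext : forall x y, (forall l, e l x = e l y) -> x = y }.

Definition entriv (G : group) (n : nat) (e : nat -> G -> G) :=
  forall l, l < n -> exists x, e l x <> 1.

Section Fac.
Variables (G : group) (e : G -> G) (hom : forall x y, e (x ** y) = e x ** e y).
Lemma fac1 : e 1 = 1. Proof. exact: hom1 hom. Qed.
Lemma facM x y : e x = x -> e y = y -> e (x ** y) = x ** y.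
Proof. by move=> a b; rewrite hom a b. Qed.
Lemma facV x : e x = x -> e (ginv x) = ginv x.
Proof. by move=> a; rewrite (homV hom) a. Qed.
Definition Fac : group := @subgrp G (fun x => e x = x) fac1 facM facV.
End Fac.

Lemma max_exists (P : nat -> Prop) B : (exists n, P n) -> (forall n, P n -> n <= B) ->
  exists n, P n /\ forall m, P m -> m <= n.
Proof.
move=> [n0 p0] hB; apply: NNPP => nomax.
have big : forall k, exists n, P n /\ k <= n.
  elim=> [|k [n [pn kn]]]; first by exists n0.
  apply: NNPP => nk; apply: nomax; exists n; split => // m pm.
  case: (leqP m n) => // lt; exfalso; apply: nk; exists m; split => //.
  exact: leq_ltn_trans kn lt.
have [n [pn le]] := big B.+1.
by have := leq_trans le (hB n pn); rewrite ltnn.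
Qed.


Lemma split_step (G : group) n (e : nat -> G -> G) (D : idec n e) (NT : entriv n e) k (kn : k < n)
  (G1 G2 : group) :
  iso_direct_product (Fac (ehom D k)) G1 G2 -> ~ trivial_group G1 -> ~ trivial_group G2 ->
  exists e' : nat -> G -> G, idec n.+1 e' /\ entriv n.+1 e'.
Proof.
move=> [f [fhom [finj fsurj]]] n1 n2.
set F := Fac (ehom D k) in f fhom finj fsurj *.
pose g (p : (G1 * G2)%type) : F := proj1_sig (constructive_indefinite_description _ (fsurj p)).
have fg : forall p, f (g p) = p.
  move=> p; exact: (proj2_sig (constructive_indefinite_description _ (fsurj p))).
have f1 : f 1 = (1, 1).
  have h := fhom 1 1; rewrite gmul1l in h.
  move: h; case: (f 1) => a b [ha hb]; congr pair.
    by apply: (@mulg_cancl _ a); rewrite gmul1r -ha.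
  by apply: (@mulg_cancl _ b); rewrite gmul1r -hb.
have g1 : g (1, 1) = 1 by apply: finj; rewrite fg f1.
have gM : forall u1 v1 u2 v2, g (u1 ** u2, v1 ** v2) = g (u1, v1) ** g (u2, v2).
  by move=> u1 v1 u2 v2; apply: finj; rewrite fhom !fg.
have gMl : forall u1 u2, g (u1 ** u2, 1) = g (u1, 1) ** g (u2, 1).
  by move=> u1 u2; rewrite -gM gmul1l.
have gMr : forall v1 v2, g (1, v1 ** v2) = g (1, v1) ** g (1, v2).
  by move=> v1 v2; rewrite -gM gmul1l.
pose inF x : F := exist (fun y => e k y = y) (e k x) (eidem D k x).
have inFM : forall x y, inF (x ** y) = inF x ** inF y.
  by move=> x y; apply: sig_inj => /=; rewrite (ehom D).
have inFK : forall a : F, inF (proj1_sig a) = a.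
  by move=> a; apply: sig_inj => /=; exact: (proj2_sig a).
have inF1 : forall x, e k x = 1 -> inF x = 1.
  by move=> x h; apply: sig_inj => /=.
pose A x := proj1_sig (g ((f (inF x)).1, 1)).
pose B x := proj1_sig (g (1, (f (inF x)).2)).
have AM : forall x y, A (x ** y) = A x ** A y.
  by move=> x y; rewrite /A inFM fhom /= gMl.
have BM : forall x y, B (x ** y) = B x ** B y.
  by move=> x y; rewrite /B inFM fhom /= gMr.
have eAB : forall x, e k x = A x ** B x.
  move=> x.
  have : inF x = g ((f (inF x)).1, 1) ** g (1, (f (inF x)).2).
    apply: finj; rewrite fhom !fg /= gmul1l gmul1r; exact: surjective_pairing.
  by move/(f_equal (@proj1_sig _ _)).
have AA : forall x, A (A x) = A x by move=> x; rewrite {1}/A inFK fg.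
have BB : forall x, B (B x) = B x by move=> x; rewrite {1}/B inFK fg.
have BA : forall x, B (A x) = 1 by move=> x; rewrite {1}/B inFK fg /= g1.
have AB : forall x, A (B x) = 1 by move=> x; rewrite {1}/A inFK fg /= g1.
have Ae : forall l x, l <> k -> A (e l x) = 1.
  by move=> l x lk; rewrite /A inF1 ?f1 ?g1 // (eorth D) // => e'; apply: lk.
have Be : forall l x, l <> k -> B (e l x) = 1.
  by move=> l x lk; rewrite /B inF1 ?f1 ?g1 // (eorth D) // => e'; apply: lk.
have kA : forall x, e k (A x) = A x.
  by move=> x; exact: (proj2_sig (g ((f (inF x)).1, 1))).
have kB : forall x, e k (B x) = B x.
  by move=> x; exact: (proj2_sig (g (1, (f (inF x)).2))).
have eA : forall l x, l <> k -> e l (A x) = 1.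
  by move=> l x lk; rewrite -kA (eorth D).
have eB : forall l x, l <> k -> e l (B x) = 1.
  by move=> l x lk; rewrite -kB (eorth D).
have nk : n <> k by move=> h; rewrite h ltnn in kn.
pose e' l x := if l == k then A x else if l == n then B x else e l x.
exists e'; split.
  split.
  - move=> l x y; rewrite /e'; case: (l =P k) => // _; case: (l =P n) => // _.
    exact: (ehom D).
  - move=> l x; rewrite /e'; case: (l =P k) => // _; case: (l =P n) => // _.
    exact: (eidem D).
  - move=> l m x lm; rewrite /e'.
    case: (l =P k) => [lk|lk]; case: (m =P k) => [mk|mk] /=.
    + by exfalso; apply: lm; rewrite lk mk.
    + case: (m =P n) => [_|mn] /=; [exact: AB | exact: Ae].
    + case: (l =P n) => [_|ln] /=; [exact: BA | exact: eA].
    + case: (l =P n) => [ln|ln]; case: (m =P n) => [mn|mn] /=.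
      * by exfalso; apply: lm; rewrite ln mn.
      * by apply: Be.
      * by apply: eB.
      * exact: (eorth D).
  - move=> l x hl; rewrite /e'.
    case: (l =P k) => [lk|_]; first by rewrite lk in hl; move: (ltn_trans kn hl); rewrite ltnn.
    case: (l =P n) => [ln|_]; first by rewrite ln ltnn in hl.
    by apply: (etriv D); exact: ltnW.
  - move=> x y h; apply: (eext D) => l.
    case: (l =P k) => [->|lk].
      have hA := h k; have hB := h n; rewrite /e' eqxx in hA.
      rewrite /e' (introF eqP nk) eqxx in hB.
      by rewrite !eAB hA hB.
    case: (l =P n) => [->|ln]; first by rewrite !(etriv D).
    have := h l; by rewrite /e' (introF eqP lk) (introF eqP ln).
move=> l; rewrite ltnS leq_eqVlt => /orP [/eqP ->|ln].
  have [v hv] := not_all_ex_not _ _ n2.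
  exists (proj1_sig (g (1, v))).
  rewrite /e' (introF eqP nk) eqxx.
  rewrite {1}/B inFK fg /= => h.
  apply: hv.
  have : g (1, v) = 1 by apply: sig_inj.
  by move/(f_equal f); rewrite fg f1 => [[]].
case: (l =P k) => [->|lk].
  have [u hu] := not_all_ex_not _ _ n1.
  exists (proj1_sig (g (u, 1))).
  rewrite /e' eqxx.
  rewrite {1}/A inFK fg /= => h.
  apply: hu.
  have : g (u, 1) = 1 by apply: sig_inj.
  by move/(f_equal f); rewrite fg f1 => [[]].
have [x hx] := NT l ln.
exists x; rewrite /e' (introF eqP lk).
have -> : (l == n) = false by apply/eqP => h; rewrite h ltnn in ln.
exact: hx.
Qed.


Lemma bound (G : group) : linear_group G -> trivial_centre G ->
  exists B, forall n (e : nat -> G -> G), idec n e -> entriv n e -> n <= B.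
Proof.
move=> [K [d [rho [rinj [runit rmul]]]]] tc.
exists (d * d) => n e D NT.
have st : forall l, exists p : (G * G)%type, l < n ->
    [/\ e l p.1 = p.1, p.1 <> 1, e l p.2 = p.2 & ~ gcomm p.1 p.2].
  move=> l; case: (ltnP l n) => [ln|nl]; last first.
    by exists (1, 1).
  have [x hx] := NT l ln.
  pose s := e l x.
  have [g hg] : exists g, ~ gcomm s g.
    apply: NNPP => h; apply: hx; apply: tc => y.
    apply: NNPP => h'; apply: h; by exists y.
  exists (s, e l g) => _ /=; split => //.
  - exact: (eidem D).
  - exact: (eidem D).
  move=> c; apply: hg.
  have -> : g = e l g ** (ginv (e l g) ** g) by rewrite mulVKg.
  apply: gcommC; apply: gcommM; first exact: gcommC.
  apply: gcommC; apply: (comm_img_ker (ehom D) (eorth D) (eext D) (i:=l)).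
    exact: (eidem D).
  by rewrite (ehom D) (homV (ehom D l)) (eidem D) gmulVl.
pose p l := proj1_sig (constructive_indefinite_description _ (st l)).
have hp : forall l, l < n -> _ := fun l => proj2_sig (constructive_indefinite_description _ (st l)).
apply: (@lin_indep_bound K d n (fun l => rho (p l).1) (fun l => rho (p l).2)).
  move=> l m ln mn lm /=.
  have [a1 _ _ _] := hp m mn; have [_ _ a2 _] := hp l ln.
  rewrite -!rmul; congr rho.
  rewrite -a1 -a2; apply: (comm_img_img (ehom D) (eidem D) (eorth D) (eext D)).
  by move=> e'; apply: lm.
move=> l ln /= e'.
have [_ _ _ nc] := hp l ln; apply: nc.
by apply: rinj; rewrite !rmul.
Qed.

Lemma base (G : group) : exists n (e : nat -> G -> G), idec n e /\ entriv n e.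
Proof.
case: (classic (trivial_group G)) => [tg|ntg].
  exists 0, (fun _ _ => 1); split; last by move=> l.
  split; [by move=> *; rewrite gmul1l | by [] | by [] | by [] |].
  by move=> x y _; rewrite (tg x) (tg y).
exists (S O), (fun l x => if l == 0 then x else 1); split.
  split.
  - by move=> l x y; case: (l == 0) => //; rewrite gmul1l.
  - by move=> l x; case: (l == 0).
  - move=> l m x lm; case: (l =P 0) => [l0|//]; case: (m =P 0) => [m0|//].
    by exfalso; apply: lm; rewrite l0 m0.
  - by move=> l x; case: l.
  - by move=> x y h; have := h 0.
move=> l; rewrite ltnS leqn0 => /eqP ->.
have [x hx] := not_all_ex_not _ _ ntg.
by exists x.
Qed.

Fixpoint prodn (G : group) (k : nat) (g : nat -> G) : G :=
  match k with 0 => gone G | k'.+1 => prodn k' g ** g k' end.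

Lemma e_prodn (G : group) n (e : nat -> G -> G) (D : idec n e) (g : nat -> G) :
  (forall l, e l (g l) = g l) -> forall m k, e m (prodn k g) = if m < k then g m else 1.
Proof.
move=> hg m; elim=> [|k IH] /=; first exact: hom1 (ehom D m).
rewrite (ehom D) IH ltnS (leq_eqVlt m k).
case: (m =P k) => [->|mk] /=.
  by rewrite ltnn hg gmul1l.
have -> : e m (g k) = 1 by rewrite -hg (eorth D).
by case: (m < k); rewrite gmul1r.
Qed.

Lemma inseq_In (T : eqType) (x : T) (s : seq T) : x \in s -> List.In x s.
Proof.
elim: s => //= y s IH; rewrite in_cons => /orP [/eqP ->|/IH]; by [left|right].
Qed.

Lemma convert (G : group) n (e : nat -> G -> G) (D : idec n e) :
  (forall l, l < n -> indecomposable (Fac (ehom D l))) ->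
  exists (I : Type) (H : I -> group), direct_decomposition G H.
Proof.
move=> hind.
exists 'I_n, (fun i : 'I_n => Fac (ehom D i)); split.
  by move=> i; apply: hind.
pose phi (x : G) : forall i : 'I_n, Fac (ehom D i) :=
  fun i => exist (fun y => e i y = y) (e i x) (eidem D i x).
exists phi; split.
  move=> x y; apply: functional_extensionality_dep => i; apply: sig_inj => /=.
  exact: (ehom D).
split.
  move=> x y h; apply: (eext D) => l.
  case: (ltnP l n) => [ln|nl]; last by rewrite !(etriv D).
  by have := f_equal (fun f => proj1_sig (f (Ordinal ln))) h.
move=> f; split => [_|_]; last first.
  exists (enum 'I_n) => i ni; exfalso; apply: ni; apply: inseq_In; exact: mem_enum.
pose gf (l : nat) : G := match insub l with Some i => proj1_sig (f i) | None => 1 end.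
have hg : forall l, e l (gf l) = gf l.
  move=> l; rewrite /gf; case: insubP => [i _ vi|_].
    by rewrite -vi; exact: (proj2_sig (f i)).
  exact: hom1 (ehom D l).
exists (prodn n gf); apply: functional_extensionality_dep => i; apply: sig_inj => /=.
rewrite (e_prodn D hg) ltn_ord /gf.
case: insubP => [j _ vj|]; last by rewrite ltn_ord.
by have -> : j = i by apply: val_inj.
Qed.


Theorem proposition14 (G : group) :
  linear_group G -> finitely_generated G -> trivial_centre G ->
  uniquely_directly_decomposable G.
Proof.
move=> lin _ tc; split; last by move=> I H J K; apply: uniqueness.
have [B hB] := bound lin tc.
have [n [[e [De NT]] nmax]] := @max_exists
   (fun n => exists e : nat -> G -> G, idec n e /\ entriv n e) B (base G)
   (fun m h => let: ex_intro e (conj De NT) := h in hB m e De NT).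
apply: (@convert G n e De) => l hl; split.
  move=> triv; have [x hx] := NT l hl; apply: hx.
  have := triv (exist (fun y => e l y = y) (e l x) (eidem De l x)).
  by move/(f_equal (@proj1_sig _ _)).
move=> G1 G2 iso; apply: NNPP => nn.
have n1 : ~ trivial_group G1 by move=> h; apply: nn; left.
have n2 : ~ trivial_group G2 by move=> h; apply: nn; right.
have [e' [De' NT']] := @split_step G n e De NT l hl G1 G2 iso n1 n2.
have := nmax n.+1 (ex_intro _ e' (conj De' NT')).
by rewrite ltnn.
Qed.
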